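(* Let $S$ be an idempotent semiring. Then $S$ satisfies the identity $x+xy+x\approx x$ if and only if $S$ satisfies $x+xyx+x\approx x$ and $\mathcal{R}^{\bullet}\subseteq\mathcal{D}^{+}$.
   Context: An idempotent semiring is an algebra $(S,+,\cdot)$ with two binary operations such that $(S,+)$ and $(S,\cdot)$ are bands (associative, with $x+x=x$ and $xx=x$), and both distributive laws $x(y+z)=xy+xz$ and $(x+y)z=xz+yz$ hold; addition is not assumed commutative. Green's relations: $a\,\mathcal{R}^{\bullet}\,b$ iff $ab=b$ and $ba=a$; $a\,\mathcal{D}^{+}\,b$ iff $a+b+a=a$ and $b+a+b=b$. *)

(* Defs.v *)
Record idem_semiring : Type := IdemSemiring {
  carrier :> Type;
  add : carrier -> carrier -> carrier;
  mul : carrier -> carrier -> carrier;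
  add_assoc : forall x y z, add x (add y z) = add (add x y) z;
  add_idem : forall x, add x x = x;
  mul_assoc : forall x y z, mul x (mul y z) = mul (mul x y) z;
  mul_idem : forall x, mul x x = x;
  mul_add_distr_l : forall x y z, mul x (add y z) = add (mul x y) (mul x z);
  mul_add_distr_r : forall x y z, mul (add x y) z = add (mul x z) (mul y z)
}.

Arguments add {i} _ _.
Arguments mul {i} _ _.

(* Green's relation R for the multiplicative reduct: a R b iff ab = b and ba = a *)
Definition R_mul {S : idem_semiring} (a b : S) : Prop :=
  mul a b = b /\ mul b a = a.

(* Green's relation D for the additive reduct: a D b iff a+b+a = a and b+a+b = b *)
Definition D_add {S : idem_semiring} (a b : S) : Prop :=
  add (add a b) a = a /\ add (add b a) b = b.

(* Main.v *)
Require Import Defs.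

Theorem lemma3p2 (S : idem_semiring) :
  (forall x y : S, add (add x (mul x y)) x = x) <->
  ((forall x y : S, add (add x (mul (mul x y) x)) x = x) /\
   (forall a b : S, R_mul a b -> D_add a b)).
Proof.
  split.
  - intros H. split.
    + intros x y. rewrite <- mul_assoc. apply H.
    + intros a b [Hab Hba]. split.
      * rewrite <- Hab. apply H.
      * rewrite <- Hba. apply H.
  - intros [H1 H2] x y.
    set (b := add (add x (mul x y)) x).
    assert (Hr : R_mul x b).
    { split; unfold b.
      - rewrite !mul_add_distr_l, mul_idem, mul_assoc, mul_idem. reflexivity.
      - rewrite !mul_add_distr_r, mul_idem. apply H1. }
    destruct (H2 _ _ Hr) as [Hd _].
    rewrite <- Hd. unfold b.
    rewrite !add_assoc, add_idem.
    rewrite <- (@add_assoc S _ x x), (add_idem S x). reflexivity.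
Qed.
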